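(* In the setting below, let $\Omega$ have the inner $\epsilon$-ball property for some $\epsilon>0$, let $0<m\le f_\mu\le M<\infty$ on $\Omega$, let $p>n$, $p\ge4$ with $M_p:=\int|x|^pd\nu<\infty$, and let $q$ satisfy $\frac1p+\frac1q=1$. Assume that $\phi_\mu$ and all $\phi_{\mu;R}$ are Hölder continuous on $\Omega$ with exponent $1-\frac np$ and a common constant $C_H$ (as holds under these assumptions by a result of Berman–Berndtsson), and that $\|\phi_{\mu;R}-\phi_\mu\|_{L^1(\Omega)}\le h(R)$ with $h(R)\to0$ as $R\to\infty$. Then there exist $R_0>0$ and $C=C(n,p,\Omega,m,M,C_H)$ such that for all $R\ge R_0$, $$\max_{x\in\Omega}|\phi_{\mu;R}(x)-\phi_\mu(x)|\le C\,h(R)^{\frac{1-n/p}{1+n/q}}.$$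
   Context: Setting: $\Omega\subset\mathbb{R}^n$ compact convex with nonempty interior; $\mu$ a probability measure with density $f_\mu$, $\mathrm{spt}(\mu)=\Omega$; $\nu$ a probability measure on $\mathbb{R}^n$ with a density and finite second moment; $\nu_R(E):=\nu(E\cap B_R(0))/\nu(B_R(0))$. Cost $\frac12|x-y|^2$. $\phi_\mu$ ($\phi_{\mu;R}$) is the Brenier potential for $\mu\to\nu$ ($\mu\to\nu_R$): convex, whose gradient is the optimal transport map $\mu$-a.e.; constants fixed by $\int_\Omega\phi_\mu\,dx=\int_\Omega\phi_{\mu;R}\,dx=0$. A closed set $A$ has the inner $\epsilon$-ball property if there is a set $A'$ with $A=\bigcup_{x\in A'}\overline{B_\epsilon(x)}$. *)

(* Defs.v *)
From HB Require Import structures.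
From mathcomp Require Import all_boot all_order all_algebra.
From mathcomp Require Import all_classical all_reals all_analysis.
Set Implicit Arguments. Unset Strict Implicit. Unset Printing Implicit Defensive.
Import Order.TTheory GRing.Theory Num.Theory.
Import numFieldNormedType.Exports.
Local Open Scope classical_set_scope.
Local Open Scope ring_scope.

Section Defs.
Variables (R : realType) (n : nat).

Definition pt := 'rV[R]_n.

Definition enorm (x : pt) : R := Num.sqrt (\sum_(i < n) x ord0 i ^+ 2).

Definition cball (c : pt) (r : R) : set pt := [set x | enorm (x - c) <= r].
Definition oball (c : pt) (r : R) : set pt := [set x | enorm (x - c) < r].

Definition borel := g_sigma_algebraType (@open pt).

(* lam is the (Borel) Lebesgue measure on R^n: the measure on Borel sets
   giving each closed box its volume (this determines it uniquely). *)
Definition box (a b : pt) : set pt := [set x | forall i, a ord0 i <= x ord0 i <= b ord0 i].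
Definition is_lebesgue (lam : {measure set borel -> \bar R}) : Prop :=
  forall a b : pt, (forall i, a ord0 i <= b ord0 i) ->
    lam (box a b) = (\prod_(i < n) (b ord0 i - a ord0 i))%:E.

Definition convex_on (A : set pt) (f : pt -> R) : Prop :=
  forall x y t, A x -> A y -> 0 <= t <= 1 ->
    f ((1 - t) *: x + t *: y) <= (1 - t) * f x + t * f y.

Definition inner_ball_property (A : set pt) (eps : R) : Prop :=
  closed A /\ exists A' : set pt, A = \bigcup_(x in A') cball x eps.

Definition msupport (mu : {measure set borel -> \bar R}) : set pt :=
  [set x | forall U : set pt, open U -> U x -> (0 < mu (U : set borel))%E].

Definition has_density (lam mu : {measure set borel -> \bar R}) (f : pt -> R) : Prop :=
  (forall x, 0 <= f x) /\ measurable_fun [set: borel] (f : borel -> R) /\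
  forall A : set borel, measurable A -> mu A = (\int[lam]_(x in A) (f x)%:E)%E.

Definition is_probability (mu : {measure set borel -> \bar R}) : Prop :=
  mu [set: borel] = 1%E.

Definition grad (f : pt -> R) (x : pt) : pt :=
  \row_(i < n) ('D_(delta_mx ord0 i : pt) f x).

Definition pushes (mu : {measure set borel -> \bar R}) (nu : set borel -> \bar R)
    (S : pt -> pt) : Prop :=
  measurable_fun [set: borel] (S : borel -> borel) /\
  forall B : set borel, measurable B -> mu ((S : borel -> borel) @^-1` B) = nu B.

Definition cost (mu : {measure set borel -> \bar R}) (S : pt -> pt) : \bar R :=
  (\int[mu]_(x in [set: borel]) ((enorm (x - S x) ^+ 2) / 2)%:E)%E.

Definition optimal_map (mu : {measure set borel -> \bar R}) (nu : set borel -> \bar R)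
    (T : pt -> pt) : Prop :=
  pushes mu nu T /\ forall S, pushes mu nu S -> (cost mu T <= cost mu S)%E.

Definition brenier (Omega : set pt) (mu : {measure set borel -> \bar R})
    (nu : set borel -> \bar R) (phi : pt -> R) : Prop :=
  convex_on Omega phi /\
  exists T, optimal_map mu nu T /\
    {ae mu, forall x : borel, differentiable phi x /\ T x = grad phi x}.

Definition restr (nu : {measure set borel -> \bar R}) (r : R) : set borel -> \bar R :=
  fun E => (fine (nu (E `&` (oball 0 r : set borel))) / fine (nu (oball 0 r : set borel)))%:E.

Definition holder_on (A : set pt) (f : pt -> R) (alpha CH : R) : Prop :=
  forall x y, A x -> A y -> `|f x - f y| <= CH * (enorm (x - y)) `^ alpha.

End Defs.

(* Main.v *)
Require Import Defs.
From HB Require Import structures.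
From mathcomp Require Import all_boot all_order all_algebra.
From mathcomp Require Import all_classical all_reals all_analysis.
From mathcomp Require Import ring lra.
Import Order.TTheory GRing.Theory Num.Theory.
Import numFieldNormedType.Exports.
Local Open Scope classical_set_scope.
Local Open Scope ring_scope.

Set Implicit Arguments.
Section Helpers.
Variables (R : realType) (n : nat).

Lemma enorm_ge0 (x : pt R n) : 0 <= enorm x.
Proof. exact: sqrtr_ge0. Qed.

Lemma enorm_le (x : pt R n) (r : R) : 0 <= r ->
  \sum_(i < n) x ord0 i ^+ 2 <= r ^+ 2 -> enorm x <= r.
Proof.
move=> r0 H; rewrite /enorm -(ger0_norm r0) -sqrtr_sqr.
by rewrite ler_sqrt // exprn_ge0.
Qed.

Lemma enorm_sq (x : pt R n) : enorm x ^+ 2 = \sum_(i < n) x ord0 i ^+ 2.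
Proof. by rewrite /enorm sqr_sqrtr // sumr_ge0 // => i _; rewrite sqr_ge0. Qed.

Lemma coord_cont i : continuous (fun x : pt R n => x ord0 i).
Proof. exact: coord_continuous. Qed.

Lemma sum_cont (I : Type) (r : seq I) (F : I -> pt R n -> R) :
  (forall i, continuous (F i)) -> continuous (fun x => \sum_(i <- r) F i x).
Proof.
move=> HF; elim: r => [|j r IH] x.
  have -> : (fun x => \sum_(i <- [::]) F i x) = cst 0.
    by apply: funext => y; rewrite big_nil.
  exact: cst_continuous.
have -> : (fun x => \sum_(i <- j :: r) F i x) = (F j + (fun x => \sum_(i <- r) F i x))%R.
  by apply: funext => y; rewrite big_cons.
by apply: continuousD; [exact: HF|exact: IH].
Qed.

Lemma enorm_cont (c : pt R n) : continuous (fun x : pt R n => enorm (x - c)).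
Proof.
move=> x.
apply: (@continuous_comp _ _ _ (fun x : pt R n => \sum_(i < n) (x - c) ord0 i ^+ 2) (@Num.sqrt R)); last exact: sqrt_continuous.
apply: (@sum_cont _ _ (fun i (x : pt R n) => (x - c) ord0 i ^+ 2)) => i y.
have -> : (fun x : pt R n => (x - c) ord0 i ^+ 2) = (fun t => t ^+ 2) \o (fun x : pt R n => x ord0 i - c ord0 i).
  by apply: funext => z; rewrite /= !mxE.
apply: (@continuous_comp _ _ _ (fun x : pt R n => x ord0 i - c ord0 i) (fun t => t ^+ 2)); last exact: exprn_continuous.
apply: continuousB; [exact: coord_cont | exact: cst_continuous].
Qed.

Lemma open_meas (A : set (pt R n)) : open A -> measurable (A : set (borel R n)).
Proof. by move=> oA; exact: sub_sigma_algebra. Qed.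

Lemma oball_meas (c : pt R n) r : measurable (oball c r : set (borel R n)).
Proof.
apply: open_meas.
have -> : oball c r = (fun x => enorm (x - c)) @^-1` [set t | t < r] by [].
apply: open_comp; last exact: open_lt.
by move=> x _; exact: enorm_cont.
Qed.

Lemma box_meas (a b : pt R n) : measurable (box a b : set (borel R n)).
Proof.
have -> : box a b = ~` \bigcup_(i in [set: 'I_n])
   ((fun x : pt R n => x ord0 i) @^-1` [set t | t < a ord0 i] `|`
    (fun x : pt R n => x ord0 i) @^-1` [set t | b ord0 i < t]).
  apply/seteqP; split => x /=.
    move=> Hx [i _ /= [|]]; have /andP[h1 h2] := Hx i.
      by rewrite ltNge h1.
    by rewrite ltNge h2.
  move=> Hx i; apply/andP; split; rewrite leNgt; apply/negP => H; apply: Hx;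
    exists i => //; [left|right]; exact: H.
apply: measurableC; apply: open_meas; apply: bigcup_open => i _.
apply: openU; (apply: open_comp; [by move=> x _; exact: coord_cont|]).
  exact: open_lt.
exact: open_gt.
Qed.

Lemma box_inside (x0 c : pt R n) (eps rho : R) : 0 < rho -> rho <= eps ->
  enorm (x0 - c) <= eps ->
  let t := rho / (2 * eps) in let s := rho / (4 * (n%:R + 1)) in
  box (\row_i (x0 ord0 i - t * (x0 ord0 i - c ord0 i) - s))
      (\row_i (x0 ord0 i - t * (x0 ord0 i - c ord0 i) + s))
  `<=` cball c eps `&` cball x0 rho.
Proof.
move=> rho0 rhoe hc t s x Hx.
have eps0 : 0 < eps by apply: lt_le_trans rhoe.
set N : R := n%:R.
have N0 : 0 <= N by rewrite /N ler0n.
have t0 : 0 < t by rewrite /t divr_gt0 // mulr_gt0.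
have tE : t * (2 * eps) = rho by rewrite /t mulfVK // gt_eqF // mulr_gt0.
have s0 : 0 < s by rewrite /s divr_gt0 // mulr_gt0 // ltr_wpDl.
have sE : s * (4 * (N + 1)) = rho by rewrite /s mulfVK // gt_eqF // mulr_gt0 // ltr_wpDl.
clearbody t s.
pose e i := x0 ord0 i - c ord0 i.
pose S := \sum_(i < n) e i ^+ 2.
have S0 : 0 <= S by apply: sumr_ge0 => i _; exact: sqr_ge0.
have SE : S <= eps ^+ 2.
  have -> : S = enorm (x0 - c) ^+ 2.
    by rewrite enorm_sq /S; apply: eq_bigr => i _; rewrite /e !mxE.
  by apply: lerXn2r => //; rewrite ?nnegrE ?enorm_ge0 ?ltW.
have t2 : t <= 1/2.
  have : t * (2 * eps) <= eps by rewrite tE.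
  move=> H; nra.
have sN : s ^+ 2 * N <= rho ^+ 2 / 16.
  rewrite -sE; nra.
have tr : t ^+ 2 * eps ^+ 2 = rho ^+ 2 / 4 by rewrite -tE; field.
pose u i := x ord0 i - (x0 ord0 i - t * e i).
have us i : u i ^+ 2 <= s ^+ 2.
  have /andP[h1 h2] := Hx i; move: h1 h2; rewrite !mxE /u /e => h1 h2; nra.
have tS : t ^+ 2 * S <= t ^+ 2 * eps ^+ 2 by apply: ler_wpM2l => //; exact: sqr_ge0.
split.
- apply: enorm_le; first exact: ltW.
  have -> : \sum_(i < n) (x - c) ord0 i ^+ 2 = \sum_(i < n) (u i + (1 - t) * e i) ^+ 2.
    by apply: eq_bigr => i _; rewrite !mxE /u /e; congr (_ ^+ 2); ring.
  have H : t * \sum_(i < n) (u i + (1 - t) * e i) ^+ 2 <=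
       \sum_(i < n) ((1 + t) * s ^+ 2 + (t * (1 + t) * (1 - t) ^+ 2) * e i ^+ 2).
    rewrite mulr_sumr; apply: ler_sum => i _.
    have := us i; have := sqr_ge0 (u i - t * ((1 - t) * e i)); nra.
  have E1 : \sum_(i < n) ((1 + t) * s ^+ 2 + (t * (1 + t) * (1 - t) ^+ 2) * e i ^+ 2)
      = (1 + t) * (s ^+ 2 * N) + (t * (1 + t) * (1 - t) ^+ 2) * S.
    rewrite big_split /= sumr_const card_ord -mulr_sumr -/S /N -mulr_natr; ring.
  rewrite E1 in H.
  have H2 : t * (1 + t) * (1 - t) ^+ 2 <= t * (1 - t) by nra.
  have H3 : t * (1 + t) * (1 - t) ^+ 2 * S <= t * (1 - t) * eps ^+ 2.
    apply: le_trans (_ : t * (1 - t) * S <= _).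
      by apply: ler_wpM2r.
    by apply: ler_wpM2l => //; nra.
  have H4 : (1 + t) * (s ^+ 2 * N) <= t ^+ 2 * eps ^+ 2.
    rewrite tr; nra.
  set Q := \sum_(i < n) _ in H *.
  have : t * Q <= t * eps ^+ 2.
    apply: le_trans H _.
    have E2 : t * (1 - t) * eps ^+ 2 = t * eps ^+ 2 - t ^+ 2 * eps ^+ 2 by ring.
    lra.
  by rewrite ler_pM2l.
- apply: enorm_le; first exact: ltW.
  have -> : \sum_(i < n) (x - x0) ord0 i ^+ 2 = \sum_(i < n) (u i - t * e i) ^+ 2.
    by apply: eq_bigr => i _; rewrite !mxE /u /e; congr (_ ^+ 2); ring.
  have H : \sum_(i < n) (u i - t * e i) ^+ 2 <=
       \sum_(i < n) (2 * s ^+ 2 + (2 * t ^+ 2) * e i ^+ 2).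
    apply: ler_sum => i _.
    have := us i; have := sqr_ge0 (u i + t * e i); nra.
  have E1 : \sum_(i < n) (2 * s ^+ 2 + (2 * t ^+ 2) * e i ^+ 2)
      = 2 * (s ^+ 2 * N) + 2 * (t ^+ 2 * S).
    rewrite big_split /= sumr_const card_ord -mulr_sumr -/S /N -mulr_natr; ring.
  rewrite E1 in H.
  apply: le_trans H _.
  have := sqr_ge0 rho; lra.
Qed.

Lemma int_lower (lam : {measure set (borel R n) -> \bar R}) (hlam : is_lebesgue lam)
  (Omega : set (pt R n)) (eps : R) (A' : set (pt R n))
  (hO : Omega = \bigcup_(x in A') cball x eps) (f : pt R n -> R) (x0 : pt R n)
  (rho d : R) :
  Omega x0 -> 0 < rho -> rho <= eps -> 0 <= d ->
  (forall x, Omega x -> enorm (x - x0) <= rho -> d <= `|f x|) ->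
  ((d * (((2 * (n%:R + 1)) ^+ n)^-1 * rho ^+ n))%:E <=
     \int[lam]_(x in (Omega : set (borel R n))) (`|f x|)%:E)%E.
Proof.
move=> Ox0 rho0 rhoe d0 Hf.
have := Ox0; rewrite {1}hO => -[c Ac /= hc].
have hc' : enorm (x0 - c) <= eps by [].
have := @box_inside x0 c eps rho rho0 rhoe hc'.
set t := rho / (2 * eps); set s := rho / (4 * (n%:R + 1)).
set a := \row_i (x0 ord0 i - t * (x0 ord0 i - c ord0 i) - s).
set b := \row_i (x0 ord0 i - t * (x0 ord0 i - c ord0 i) + s) => HB.
have s0 : 0 < s by rewrite /s divr_gt0 // mulr_gt0 // ltr_wpDl.
have BO : box a b `<=` Omega.
  move=> x /HB [h1 h2]; rewrite hO; exists c => //.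
have volB : lam (box a b : set (borel R n)) = ((2 * s) ^+ n)%:E.
  rewrite hlam; last by move=> i; rewrite !mxE; lra.
  congr (_%:E); rewrite (eq_bigr (fun _ => 2 * s)); last by move=> i _; rewrite !mxE; ring.
  by rewrite prodr_const card_ord.
have -> : d * (((2 * (n%:R + 1)) ^+ n)^-1 * rho ^+ n) = d * (2 * s) ^+ n.
  congr (_ * _); rewrite /s -exprVn -exprMn; congr (_ ^+ _); field.
  by rewrite lt0r_neq0 // ltr_wpDl.
rewrite EFinM -volB -integral_cst; last exact: box_meas.
rewrite [X in (_ <= X)%E]ge0_integralE; last by move=> x _; rewrite lee_fin.
rewrite ge0_integralE; last by move=> x _; rewrite /= lee_fin.
apply: ereal_sup_le => _ [g hg <-]; exists g => //= x.
apply: le_trans (hg x) _.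
rewrite /patch; case: ifPn => xB; last first.
  by case: ifPn => _ //; rewrite lee_fin.
have xB' : box a b x by rewrite inE in xB.
have -> : x \in (Omega : set (borel R n)) by rewrite inE; exact: BO.
rewrite lee_fin; apply: Hf; first exact: BO.
by have [_ h2] := HB x xB'.
Qed.

Lemma nu_ball_pos (nu : {measure set (borel R n) -> \bar R}) :
  is_probability nu ->
  exists k : R, 0 < k /\ (0 < nu (oball (0%R : pt R n) k : set (borel R n)))%E.
Proof.
move=> Pnu; case: (pselect (exists k : R, 0 < k /\ (0 < nu (oball (0%R : pt R n) k : set (borel R n)))%E)) => // Hn.
exfalso.
have H0 (i : nat) : nu (oball (0%R : pt R n) i.+1%:R : set (borel R n)) = 0%E.
  apply/eqP; rewrite eq_le measure_ge0 andbT leNgt; apply/negP => h.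
  by apply: Hn; exists i.+1%:R; split.
have := @measure_sigma_subadditive _ _ _ nu [set: borel R n]
   (fun i => oball (0%R : pt R n) i.+1%:R : set (borel R n)) (fun i => oball_meas _ _) measurableT.
have cov : [set: borel R n] `<=` \bigcup_i (oball (0%R : pt R n) i.+1%:R : set (borel R n)).
  move=> x _; exists (Num.bound (enorm (x : pt R n))) => //=.
  rewrite /oball /= subr0; apply: lt_trans (archi_boundP (enorm_ge0 _)) _.
  by rewrite ltr_nat.
move=> /(_ cov); rewrite eseries0; last by move=> i _ _; exact: H0.
by rewrite Pnu lee_fin ler10.
Qed.
End Helpers.
Unset Implicit Arguments.

Theorem mainTheorem15 (R : realType) (n : nat)
  (lam : {measure set (borel R n) -> \bar R}) (hlam : is_lebesgue lam)
  (Omega : set (pt R n))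
  (hOc : compact Omega) (hOconv : convex_set (Omega : set (convex_lmodType (pt R n)))) (hOint : interior Omega !=set0)
  (hOeps : exists eps : R, 0 < eps /\ inner_ball_property Omega eps)
  (m M p q CH : R) (hm : 0 < m) (hmM : m <= M)
  (hpn : n%:R < p) (hp4 : 4 <= p) (hpq : p^-1 + q^-1 = 1) :
  exists C : R, forall (mu nu : {measure set (borel R n) -> \bar R}) (fmu : pt R n -> R)
    (phi : pt R n -> R) (phiR : R -> pt R n -> R) (h : R -> R),
    is_probability mu -> has_density lam mu fmu -> msupport mu = Omega ->
    (forall x, Omega x -> m <= fmu x <= M) ->
    is_probability nu -> (exists g, has_density lam nu g) ->
    (\int[nu]_(y in [set: borel R n]) ((enorm y ^+ 2)%:E) < +oo)%E ->
    (\int[nu]_(y in [set: borel R n]) ((enorm y `^ p)%:E) < +oo)%E ->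
    brenier Omega mu nu phi ->
    (\int[lam]_(x in (Omega : set (borel R n))) (phi x)%:E = 0)%E ->
    holder_on Omega phi (1 - n%:R / p) CH ->
    (forall r : R, 0 < r -> (0 < nu (oball (0%R : pt R n) r : set (borel R n)))%E ->
       [/\ brenier Omega mu (restr nu r) (phiR r),
           (\int[lam]_(x in (Omega : set (borel R n))) (phiR r x)%:E = 0)%E,
           holder_on Omega (phiR r) (1 - n%:R / p) CH &
           (\int[lam]_(x in (Omega : set (borel R n))) (`|phiR r x - phi x|)%:E
              <= (h r)%:E)%E]) ->
    h x @[x --> +oo] --> 0 ->
    exists R0 : R, 0 < R0 /\
      forall r, R0 <= r -> forall x, Omega x ->
        `|phiR r x - phi x| <= C * (h r) `^ ((1 - n%:R / p) / (1 + n%:R / q)).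
Proof.
have p0 : 0 < p by lra.
set alpha := 1 - n%:R / p.
have ha : 0 < alpha by rewrite /alpha subr_gt0 ltr_pdivrMr // mul1r.
set beta := alpha / (1 + n%:R / q).
have hq : 1 + n%:R / q = alpha + n%:R.
  rewrite /alpha; have -> : q^-1 = 1 - p^-1 by lra.
  ring.
have an0 : 0 < alpha + n%:R by rewrite ltr_wpDr.
have hab : (alpha + n%:R) * beta = alpha.
  by rewrite /beta hq mulrC mulfVK // gt_eqF.
have hb0 : 0 < beta by rewrite /beta hq divr_gt0.
case: hOeps => eps [eps0 [_ [A' hO]]].
set K := Num.max CH 1.
have K1 : 1 <= K by rewrite le_max lexx orbT.
have K0 : 0 < K by lra.
have CHK : CH <= K by rewrite le_max lexx.
set c0 : R := ((2 * (n%:R + 1)) ^+ n)^-1.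
have c00 : 0 < c0 by rewrite /c0 invr_gt0 exprn_gt0 // mulr_gt0 // ltr_wpDl.
set eta0 := 2 * K * c0 * (eps `^ alpha * eps ^+ n).
have eta00 : 0 < eta0 by rewrite /eta0 !mulr_gt0 // ?powR_gt0 // exprn_gt0.
set C := 4 * K / ((2 * K * c0) `^ beta).
have C0 : 0 <= C by rewrite /C divr_ge0 // ?powR_ge0 // mulr_ge0 //; lra.
exists C.
move=> mu nu fmu phi phiR h Pmu dmu smu fb Pnu dnu m2 mp Bphi iphi Hphi HR hlim.
have [k [k0 nuk]] := nu_ball_pos Pnu.
have [M0 [_ HM0]] : exists M0 : R, M0 \is Num.real /\ forall x, M0 < x -> `|0 - h x| < eta0 / 2.
  by move: hlim => /cvgr_dist_lt /(_ (eta0 / 2) (divr_gt0 eta00 (ltr0n _ 2))).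
exists (Num.max k (Num.max (M0 + 1) 1)); split.
  by rewrite lt_max k0.
move=> r hr x0 Ox0.
have kr : k <= r by apply: le_trans hr; rewrite le_max lexx.
have Mr : M0 < r.
  apply: lt_le_trans hr; rewrite lt_max; apply/orP; right; rewrite lt_max; apply/orP; left; lra.
have r0 : 0 < r by lra.
have nur : (0 < nu (oball (0%R : pt R n) r : set (borel R n)))%E.
  apply: lt_le_trans nuk _; apply: le_measure; rewrite ?inE; try exact: oball_meas.
  by move=> x; rewrite /oball /= => hx; lra.
have [_ _ HolR Hint] := HR r r0 nur.
have hsmall : h r <= eta0 / 2.
  have := HM0 r Mr; rewrite sub0r normrN => H; apply: le_trans (ltW H); exact: ler_norm.
set f := fun x => phiR r x - phi x.
have Hf x : Omega x -> `|f x - f x0| <= 2 * K * enorm (x - x0) `^ alpha.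
  move=> Ox; have h1 := HolR x x0 Ox Ox0; have h2 := Hphi x x0 Ox Ox0.
  have e0 := powR_ge0 (enorm (x - x0)) alpha.
  have h3 : `|f x - f x0| <= `|phiR r x - phiR r x0| + `|phi x - phi x0|.
    have -> : f x - f x0 = (phiR r x - phiR r x0) - (phi x - phi x0) by rewrite /f; ring.
    exact: ler_normB.
  have h4 := ler_wpM2r e0 CHK.
  rewrite -mulrA; lra.
have hnn : 0 <= h r.
  rewrite -lee_fin; apply: le_trans Hint; apply: integral_ge0 => x _; rewrite lee_fin.
  exact: normr_ge0.
set d := `|f x0|.
case: (eqVneq d 0) => [->|dn0]; first by rewrite mulr_ge0 // powR_ge0.
have d0 : 0 < d by rewrite lt_def dn0 normr_ge0.
have q0 : 0 < d / (4 * K) by rewrite divr_gt0 // mulr_gt0.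
set rh := (d / (4 * K)) `^ alpha^-1.
have rh0 : 0 < rh by rewrite /rh powR_gt0.
have rha : rh `^ alpha = d / (4 * K).
  by rewrite /rh -powRrM mulVf ?gt_eqF // powRr1 // ltW.
clearbody rh.
have Hlow rho' : rho' <= rh -> forall x, Omega x -> enorm (x - x0) <= rho' -> d / 2 <= `|f x|.
  move=> hr' x Ox hx.
  have h1 := Hf x Ox.
  have h2 : enorm (x - x0) `^ alpha <= rh `^ alpha.
    apply: (ge0_ler_powR (ltW ha)); rewrite ?nnegrE ?enorm_ge0 ?(ltW rh0) //.
    exact: le_trans hr'.
  have h3 : 2 * K * enorm (x - x0) `^ alpha <= d / 2.
    have -> : d / 2 = 2 * K * (d / (4 * K)) by field; rewrite gt_eqF.
    by apply: ler_wpM2l; [lra | rewrite -rha].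
  have := ler_normD (f x) (f x0 - f x); rewrite (addrC (f x)) subrK (distrC (f x0)) -/d.
  lra.
have Hint' rho' : 0 < rho' -> rho' <= eps -> rho' <= rh -> d / 2 * (c0 * rho' ^+ n) <= h r.
  move=> p1 p2 p3; rewrite -lee_fin; apply: le_trans Hint.
  apply: (@int_lower R n lam hlam Omega eps A' hO f x0 rho' (d / 2) Ox0 p1 p2 _ (Hlow rho' p3)).
  lra.
case: (lerP rh eps) => hrh.
- have H1 := Hint' rh rh0 hrh (lexx _).
  have E1 : d / 2 * (c0 * rh ^+ n) = 2 * K * c0 * rh `^ (alpha + n%:R).
    rewrite powRD; last by rewrite (gt_eqF rh0) implybT.
    by rewrite powR_mulrn ?ltW // rha; field; rewrite gt_eqF.
  rewrite E1 in H1.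
  have X0 : 0 < (2 * K * c0) `^ beta by rewrite powR_gt0 // !mulr_gt0.
  have H2 : (2 * K * c0 * rh `^ (alpha + n%:R)) `^ beta <= h r `^ beta.
    apply: (ge0_ler_powR (ltW hb0)); rewrite ?nnegrE //.
    by rewrite mulr_ge0 ?powR_ge0 // !mulr_ge0 //; lra.
  rewrite powRM ?powR_ge0 // -?powRrM ?hab ?rha in H2; last by rewrite !mulr_ge0 //; lra.
  apply: (le_trans _ (ler_wpM2l C0 H2)).
  rewrite /C [leRHS](_ : _ = d) //; field.
  by rewrite !gt_eqF.
- exfalso.
  have H1 := Hint' eps eps0 (lexx _) (ltW hrh).
  have H2 : eps `^ alpha <= rh `^ alpha.
    by apply: (ge0_ler_powR (ltW ha)); rewrite ?nnegrE ?ltW.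
  rewrite rha in H2.
  have H3 : eta0 <= 2 * K * c0 * (d / (4 * K) * eps ^+ n).
    apply: ler_wpM2l; first by rewrite !mulr_ge0 //; lra.
    by apply: ler_wpM2r => //; rewrite exprn_ge0 // ltW.
  have E : 2 * K * c0 * (d / (4 * K) * eps ^+ n) = d / 2 * (c0 * eps ^+ n).
    by field; rewrite gt_eqF.
  rewrite E in H3.
  lra.
Qed.
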